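(* Let $m$ be a probability measure on $\Sigma\times\Sigma\times\mathbb{P}(\mathbb{R}^m)$ which is stationary for the kernel $\bar K$. Then there exists a unique $\eta\in\mathrm{Prob}(\Sigma\times\mathbb{P}(\mathbb{R}^m))$ such that $m=K\ltimes\eta$, that is, for every $\psi\in C(\Sigma\times\Sigma\times\mathbb{P}(\mathbb{R}^m))$, $$\int \psi(\omega_1,\omega_0,\hat v)\,dm(\omega_1,\omega_0,\hat v)=\int\!\!\int \psi(\omega_1,\omega_0,\hat v)\,dK_{\omega_0}(\omega_1)\,d\eta(\omega_0,\hat v).$$ Moreover, $\eta$ is stationary for the kernel $K_A$.
   Context: $\Sigma$ is a compact metric space, $K\colon\Sigma\to\mathrm{Prob}(\Sigma)$ is a continuous (weak* ) uniformly ergodic Markov kernel, i.e. there are $\mu\in\mathrm{Prob}(\Sigma)$, $C<\infty$, $\sigma\in(0,1)$ with $\|K^n_x-\mu\|_{TV}\le C\sigma^n$ for all $x,n$. $A\colon\Sigma\times\Sigma\to\mathrm{GL}_m(\mathbb{R})$ is a measurable fiber map. $\mathbb{P}(\mathbb{R}^m)$ is real projective space; $\hat v$ is the projective point of $v\ne0$ and $\hat A(y,x)\hat v$ is the projective point of $A(y,x)v$. The kernel $\bar K$ on $\Sigma\times\Sigma\times\mathbb{P}(\mathbb{R}^m)$ is $\bar K(\omega_1,\omega_0,\hat v)=K_{\omega_1}\times\delta_{(\omega_1,\hat A(\omega_1,\omega_0)\hat v)}$, i.e. the law of $(\omega_2,\omega_1,\hat A(\omega_1,\omega_0)\hat v)$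 with $\omega_2\sim K_{\omega_1}$. The kernel $K_A$ on $\Sigma\times\mathbb{P}(\mathbb{R}^m)$ assigns to $(\omega_0,\hat v)$ the law of $(\omega_1,\hat A(\omega_1,\omega_0)\hat v)$ with $\omega_1\sim K_{\omega_0}$. A probability $\nu$ is stationary for a kernel $P$ if $\nu(E)=\int P(z)(E)\,d\nu(z)$ for all Borel $E$. *)

(* Defs.v *)
From HB Require Import structures.
From mathcomp Require Import all_boot all_order all_algebra generic_quotient.
From mathcomp Require Import all_classical all_reals all_analysis.
From mathcomp Require Import quotient_topology subtype_topology matrix_topology.
Import numFieldTopology.Exports.

Set Implicit Arguments.
Unset Strict Implicit.
Unset Printing Implicit Defensive.

Import Order.TTheory GRing.Theory Num.Theory.
Local Open Scope classical_set_scope.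
Local Open Scope ring_scope.

(** Pointed metric spaces (metric space + a distinguished point; the point
    is only needed because measurable types are pointed in the library). *)
#[short(type="pmetricType")]
HB.structure Definition PointedMetric (K : numDomainType) :=
  { M of Metric K M & Pointed M }.

Definition borel (T : ptopologicalType) := g_sigma_algebraType (@open T).

Section Projective.
Variables (R : realType) (n : nat).

Notation nzvec := (set_type [set v : 'cV[R]_n.+1 | v != 0]).

Definition proportional (v w : nzvec) : bool :=
  `[< exists c : R, c != 0 /\ val w = c *: val v >].

Lemma proportional_refl : reflexive proportional.
Proof.
move=> v; apply/asboolP; exists 1; split; first exact: oner_neq0.
by rewrite scale1r.
Qed.

Lemma proportional_sym : symmetric proportional.
Proof.
move=> v w; apply/asboolP/asboolP => -[c [c0 e]]; exists c^-1;
  (split; first by rewrite invr_eq0);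
  by rewrite e scalerA mulVf // scale1r.
Qed.

Lemma proportional_trans : transitive proportional.
Proof.
move=> v u w /asboolP[c [c0 e1]] /asboolP[d [d0 e2]]; apply/asboolP.
exists (d * c); split; first by rewrite mulf_neq0.
by rewrite e2 e1 scalerA.
Qed.

Canonical proportional_equiv :=
  EquivRel proportional proportional_refl proportional_sym proportional_trans.

Definition projsp : Type :=
  quotient_topology {eq_quot proportional_equiv}%qT.
HB.instance Definition _ := Topological.on projsp.
HB.instance Definition _ := Quotient.on projsp.

End Projective.

Local Open Scope quotient_scope.

Section Projective2.
Variables (R : realType) (n : nat).

Local Notation nzvec := (set_type [set v : 'cV[R]_n.+1 | v != 0]).

Lemma e0_neq0 : (delta_mx 0 0 : 'cV[R]_n.+1) \in [set v : 'cV[R]_n.+1 | v != 0].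
Proof.
rewrite inE /=; apply/eqP => /matrixP /(_ 0 0); rewrite !mxE eqxx /=.
by move/eqP; rewrite oner_eq0.
Qed.

Definition e0 : nzvec := exist (fun v => v \in [set v : 'cV[R]_n.+1 | v != 0]) (delta_mx 0 0) e0_neq0.

HB.instance Definition _ := isPointed.Build (projsp R n) (\pi e0).

Definition phat (v : nzvec) : projsp R n := \pi v.

(** action of a matrix M on nonzero vectors: v |-> M v
    (well defined, i.e. nonzero, whenever M is invertible; the default
    value v is only used when M v = 0) *)
Definition nzact (M : 'M[R]_n.+1) (v : nzvec) : nzvec :=
  insubd v (M *m val v).

Definition pact (M : 'M[R]_n.+1) (p : projsp R n) : projsp R n :=
  phat (nzact M (repr p)).

End Projective2.

Section Markov.
Local Open Scope ereal_scope.
Context {R : realType}.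

Definition stationary {d} {T : measurableType d}
    (P : T -> set T -> \bar R) (nu : {measure set T -> \bar R}) : Prop :=
  forall E, measurable E -> nu E = \int[nu]_z P z E.

Fixpoint kiter {d} {T : measurableType d}
    (K : T -> {measure set T -> \bar R}) (k : nat) (x : T) (E : set T) : \bar R :=
  if k is k'.+1 then \int[K x]_y kiter K k' y E else \d_x E.

(** uniform ergodicity: ||K^k_x - mu||_TV <= C sigma^k, the total variation
    norm being sup_E |K^k_x(E) - mu(E)| over measurable E *)
Definition uniformly_ergodic {d} {T : measurableType d}
    (K : T -> {measure set T -> \bar R}) : Prop :=
  exists (mu : probability T R) (C sigma : R),
    (0 < sigma < 1)%R /\
    forall k x E, measurable E ->
      (`| fine (kiter K k x E) - fine (mu E) | <= C * sigma ^+ k)%R.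

Definition weak_continuous (S : pmetricType R)
    (K : borel S -> {measure set (borel S) -> \bar R}) : Prop :=
  forall f : S -> R, continuous f ->
    continuous (fun x : S => fine (\int[K x]_y (f y)%:E)).

Context {d : measure_display} {X : measurableType d} {n : nat}.
Local Notation P := (borel (projsp R n)).

(** Kbar(w1, (w0, v)) = law of (w2, (w1, A(w1,w0) v)) with w2 ~ K_{w1} *)
Definition Kbar (K : X -> {measure set X -> \bar R}) (A : X -> X -> 'M[R]_n.+1)
    (z : X * (X * P)) (E : set (X * (X * P))) : \bar R :=
  K z.1 ((fun w => (w, (z.1, pact (A z.1 z.2.1) z.2.2))) @^-1` E).

(** K_A(w0, v) = law of (w1, A(w1,w0) v) with w1 ~ K_{w0} *)
Definition KA (K : X -> {measure set X -> \bar R}) (A : X -> X -> 'M[R]_n.+1)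
    (z : X * P) (E : set (X * P)) : \bar R :=
  K z.1 ((fun w => (w, pact (A w z.1) z.2)) @^-1` E).

Definition ltimes {d'} {Y : measurableType d'} (K : X -> {measure set X -> \bar R})
    (eta : {measure set (X * Y) -> \bar R}) (E : set (X * (X * Y))) : \bar R :=
  \int[eta]_z K z.1 ((fun w => (w, z)) @^-1` E).

End Markov.

(* Main.v *)
Require Import Defs.
From HB Require Import structures.
From mathcomp Require Import all_boot all_order all_algebra generic_quotient.
From mathcomp Require Import all_classical all_reals all_analysis.
From mathcomp Require Import quotient_topology subtype_topology matrix_topology.
From mathcomp Require Import ring lra measurable_realfun.
Import numFieldTopology.Exports.
Set Implicit Arguments.
Unset Strict Implicit.
Unset Printing Implicit Defensive.
Import Order.TTheory GRing.Theory Num.Theory.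
Local Open Scope classical_set_scope.
Local Open Scope ring_scope.
Section T.
Variables (R : realType) (n : nat).
Local Open Scope quotient_scope.
Local Notation nzvec := (set_type [set v : 'cV[R]_n.+1 | v != 0]).
Local Notation P := (projsp R n).
Lemma openP (U : set P) : open U -> exists2 W : set 'cV[R]_n.+1, open W & forall u : nzvec, W (val u) <-> U (\pi u).
Proof.
move=> oU; case: oU => W oW eW; exists W => // u.
by have := congr1 (fun S => S u) eW => /= ->.
Qed.
Lemma openP2 (N : set P) (W : set 'cV[R]_n.+1) : open W -> (forall u : nzvec, W (val u) <-> N (\pi u)) -> open N.
Proof.
move=> oW h; exists W => //; apply/funext => u /=; apply/propext; exact: h.
Qed.
Lemma pieq (u w : nzvec) : proportional u w -> (\pi u : P) = \pi w.
Proof. by move=> h; apply/eqmodP. Qed.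
Lemma pieq2 (u w : nzvec) : (\pi u : P) = \pi w -> proportional u w.
Proof. by move/eqmodP. Qed.
Lemma repr_prop (u : nzvec) : exists2 c : R, c != 0 & val (repr (\pi u : P)) = c *: val u.
Proof.
have : proportional u (repr (\pi u : P)) by apply: pieq2; rewrite reprK.
by move/asboolP => [c [c0 e]]; exists c.
Qed.
Lemma nzactE (M : 'M[R]_n.+1) (v : nzvec) : M \in unitmx -> val (nzact M v) = M *m val v.
Proof.
move=> Mu; rewrite /nzact insubdK // inE /=.
apply/eqP => /(congr1 (mulmx (invmx M))); rewrite mulKmx // mulmx0 => h.
by move: (valP v); rewrite inE /= h eqxx.
Qed.
Lemma mul_bound k (M : 'M[R]_k) (v : 'cV[R]_k) a b :
  (forall i j, `|M i j| <= a) -> (forall j, `|v j 0| <= b) ->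
  forall i, `|(M *m v) i 0| <= k%:R * (a * b).
Proof.
move=> hM hv i; rewrite mxE; apply: le_trans (ler_norm_sum _ _ _) _.
have h : \sum_(j < k) `|M i j * v j 0| <= \sum_(j < k) (a * b).
  apply: ler_sum => j _; rewrite normrM; apply: ler_pM => //; exact: hM.
by apply: le_trans h _; rewrite sumr_const card_ord mulr_natl.
Qed.

Lemma ent_bound k l (M : 'M[R]_(k, l)) : exists a, forall i j, `|M i j| <= a.
Proof.
exists (\sum_i \sum_j `|M i j|) => i j.
have h : `|M i j| <= \sum_j `|M i j| by rewrite (bigD1 j) //= lerDl sumr_ge0.
apply: le_trans h _.
by rewrite (bigD1 i) //= lerDl sumr_ge0 // => i' _; rewrite sumr_ge0.
Qed.

Lemma E_lem k (M M' : 'M[R]_k) (x w : 'cV[R]_k) i :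
  (M *m x) i 0 - (M' *m w) i 0 = (M *m (x - w)) i 0 + ((M - M') *m w) i 0.
Proof. by rewrite mulmxBr mulmxBl !mxE addrA subrK. Qed.

Lemma ballE (x y : 'cV[R]_n.+1) e :
  ball x e y <-> (0 < e /\ forall i j, `|x i j - y i j| < e).
Proof. reflexivity. Qed.

Lemma subE k l (x y : 'M[R]_(k, l)) i j : (x - y) i j = x i j - y i j.
Proof. by rewrite !mxE. Qed.
Lemma pact_cont (M : 'M[R]_n.+1) (p : P) (U : set P) :
  M \in unitmx -> open U -> U (pact M p) ->
  exists2 e : R, 0 < e & exists2 N : set P, open N /\ N p &
    forall M' q, M' \in unitmx -> (forall i j, `|M' i j - M i j| < e) ->
      N q -> U (pact M' q).
Proof.
move=> Mu oU hU.
have [W oW hW] := openP oU.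
set v := repr p.
have W0 : W (M *m val v) by rewrite -(nzactE v Mu); apply/hW; exact: hU.
have [eps eps0 hb] : exists2 eps : R, 0 < eps &
    forall y : 'cV[R]_n.+1, (forall i j, `|(M *m val v) i j - y i j| < eps) -> W y.
  have : nbhs (M *m val v) W by apply: open_nbhs_nbhs; split.
  move/nbhs_ballP => [eps eps0 hb]; exists eps => // y hy; apply: hb.
  by apply/ballE; split.
have [a ha] := ent_bound M.
have [b hb'] := ent_bound (val v).
set c := n.+1%:R * (`|a| + `|b| + 1).
have c0 : 0 < c by rewrite mulr_gt0 // ltr_pwDr // addr_ge0.
set delta := Num.min 1 (eps / (2 * c)).
have d0 : 0 < delta by rewrite lt_min ltr01 divr_gt0 // mulr_gt0.
have d1 : delta <= 1 by rewrite ge_min lexx.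
have d2 : c * delta <= eps / 2.
  have h : delta <= eps / (2 * c) by rewrite ge_min lexx orbT.
  have -> : eps / 2 = c * (eps / (2 * c)).
    by field; rewrite gt_eqF.

  by rewrite ler_pM2l.
exists delta => //.
pose N := [set q : P | exists2 c0 : R, c0 != 0 &
   ball (val v) delta (c0 *: val (repr q))].
exists N; first split.
- apply: (@openP2 N (\bigcup_(c0 in [set c0 : R | c0 != 0])
     ((fun y => c0 *: y) @^-1` ball (val v) delta))).
    apply: bigcup_open => c1 _.
    move/continuousP : (@scaler_continuous R 'cV[R]_n.+1 c1); apply.
    exact: ball_open.
  move=> u; split.
    case=> c1 c10 /= hc1; have [d dn0 hd] := repr_prop u.
    exists (c1 / d); first by rewrite mulf_neq0 // invr_eq0.
    by rewrite hd scalerA divfK.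
  case=> c1 c10; have [d dn0 hd] := repr_prop u; rewrite hd scalerA => hc1.
  by exists (c1 * d) => //; rewrite /= mulf_neq0.
- exists 1; first exact: oner_neq0.
  by rewrite scale1r; apply: ballxx.
move=> M' q M'u hM' [c1 c10 hc1].
set w := c1 *: val (repr q).
have hw : forall j, `|val v j 0 - w j 0| < delta.
  by case/ballE: hc1 => _ h j; exact: h j 0.
have Ww : W (M' *m w).
  apply: hb => i j; rewrite (ord1 j).
  rewrite E_lem.
  have h1 : `|(M *m (val v - w)) i 0| <= n.+1%:R * (`|a| * delta).
    apply: mul_bound => [i' j'|j']; first exact: le_trans (ha i' j') (ler_norm a).
    by rewrite subE ltW.
  have h2 : `|((M - M') *m w) i 0| <= n.+1%:R * (delta * (`|b| + 1)).
    apply: mul_bound => [i' j'|j']; first by rewrite subE distrC ltW.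
    have -> : w j' 0 = val v j' 0 - (val v j' 0 - w j' 0).
      by rewrite opprB addrC subrK.
    apply: le_trans (ler_normB _ _) _.
    have := le_trans (hb' j' 0) (ler_norm b); have := hw j'.
    move=> h3 h4; apply: lerD => //; apply: le_trans d1; exact: ltW.
  apply: le_lt_trans (ler_normD _ _) _.
  have h5 : n.+1%:R * (`|a| * delta) + n.+1%:R * (delta * (`|b| + 1)) = c * delta.
    by rewrite /c; ring.
  apply: le_lt_trans (lerD h1 h2) _; rewrite h5.
  apply: le_lt_trans d2 _; rewrite ltr_pdivrMr // ltr_pMr //.
  by rewrite (_ : 2 = 1 + 1) // ltrDl ltr01.
set u1 := nzact M' (repr q).
have nz : M' *m w != 0.
  rewrite /w -scalemxAr scaler_eq0 negb_or c10 /= -(nzactE _ M'u).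
  by have := valP u1; rewrite inE.
set u2 := insubd u1 (M' *m w).
have vu2 : val u2 = M' *m w by rewrite insubdK // inE.
have : U (\pi u2) by apply/hW; rewrite vu2.
suff -> : (\pi u2 : P) = \pi u1 by [].
apply: esym; apply: pieq; apply/asboolP; exists c1; split => //.
by rewrite vu2 /w -scalemxAr (nzactE _ M'u).
Qed.

Lemma borel_measurableE (T : ptopologicalType) :
  @measurable _ (borel T) = <<s @open T >>.
Proof. by []. Qed.

Lemma pact_meas (d : measure_display) (T : measurableType d)
    (B : T -> 'M[R]_n.+1) :
  (forall t, B t \in unitmx) ->
  (forall i j, measurable_fun setT (fun t => B t i j)) ->
  measurable_fun [set: (T * borel P)%type]
    (fun z : (T * borel P)%type => (pact (B z.1) z.2 : borel P)).
Proof.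
move=> Bu Bm.
apply: (@measurability _ _ _ (borel P) setT _ (@open P)) => //.
move=> _ [U oU <-]; rewrite setTI.
pose Qr (i : 'M[rat]_n.+1 * nat) : 'M[R]_n.+1 := map_mx ratr i.1.
pose r (i : 'M[rat]_n.+1 * nat) : R := (i.2.+1%:R)^-1.
pose Ball i := [set t : T | forall a b, `|B t a b - Qr i a b| < r i].
pose Good i := [set p : P | forall M, M \in unitmx ->
   (forall a b, `|M a b - Qr i a b| < r i) -> U (pact M p)].
have -> : (fun z : (T * borel P)%type => (pact (B z.1) z.2 : borel P)) @^-1` U
    = \bigcup_i (Ball i `*` (Good i)°).
  apply/seteqP; split; last first.
    move=> [t p] [i _ [/= hb hg]].
    exact: (interior_subset hg) (Bu t) hb.
  move=> [t p] /= hU.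
  have [e e0 [N [oN Np] hN]] := pact_cont (Bu t) oU hU.
  set k := Num.truncn (2 / e).
  have hk : 2 * (k.+1%:R)^-1 < e.
    have h := truncnS_gt (2 / e).
    rewrite -/k in h.
    rewrite ltr_pdivrMr // in h.
    by rewrite -[2 * _]/(2 / _) ltr_pdivrMr // mulrC.
  have hq : forall a b, exists q : rat,
      ratr q \in `](B t a b - (k.+1%:R)^-1), (B t a b + (k.+1%:R)^-1)[.
    move=> a b; apply: rat_in_itvoo.
    by rewrite ltrBlDr -addrA ltrDl addr_gt0 // invr_gt0.
  pose Q : 'M[rat]_n.+1 := \matrix_(a, b) proj1_sig (cid (hq a b)).
  have hQ : forall a b, B t a b - (k.+1%:R)^-1 < Qr (Q, k) a b <
      B t a b + (k.+1%:R)^-1.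
    move=> a b; rewrite /Qr /= !mxE.
    by have := proj2_sig (cid (hq a b)); rewrite in_itv.
  exists (Q, k) => //; split => /=.
    move=> a b; have := hQ a b; rewrite /r /= ltr_norml => /andP[h1 h2].
    move: h1 h2; move: (k.+1%:R^-1) => s h1 h2.
    by apply/andP; split; lra.
  have : nbhs p N by apply: open_nbhs_nbhs; split.
  apply: filterS => q Nq M Mu hM; apply: hN => // a b.
  have := hM a b; have := hQ a b; rewrite /r /= !ltr_norml.
  move=> /andP[h1 h2] /andP[h3 h4].
  move: hk h1 h2 h3 h4; move: (k.+1%:R^-1) => s hk h1 h2 h3 h4.
  by apply/andP; split; lra.
apply: countable_bigcupT_measurable; first exact: countableP.
move=> i; apply: measurableX; last first.
  by apply: sub_sigma_algebra; exact: open_interior.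
have -> : Ball i = \bigcap_(ab in [set: 'I_n.+1 * 'I_n.+1])
    ((fun t => B t ab.1 ab.2) @^-1` ball (Qr i ab.1 ab.2) (r i)).
  apply/seteqP; split => t /=.
    by move=> h ab _; rewrite /ball /= distrC; exact: h.
  by move=> h a b; have := h (a, b) I; rewrite /ball /= distrC.
apply: fin_bigcap_measurable; first exact: finite_finset.
move=> ab _; rewrite -[X in measurable X]setTI; apply: Bm => //.
exact: measurable_realfun.measurable_ball.
Qed.
End T.

Section kfst.
Local Open Scope ereal_scope.
Context {R : realType} d d' (X : measurableType d) (Y : measurableType d')
  (K : R.-pker X ~> X).

Definition kfst (y : X * Y) : {measure set X -> \bar R} := K y.1.

Lemma kfst_meas U : measurable U -> measurable_fun setT (kfst ^~ U).
Proof.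
move=> mU; exact: (measurableT_comp (measurable_kernel K U mU) measurable_fst).
Qed.

HB.instance Definition _ := isKernel.Build _ _ _ _ R kfst kfst_meas.

Lemma kfst_prob y : kfst y [set: X] = 1.
Proof. exact: prob_kernel. Qed.

HB.instance Definition _ := Kernel_isProbability.Build _ _ _ _ R kfst kfst_prob.

Lemma gE_meas (E : set (X * (X * Y))) : measurable E ->
  measurable_fun setT (fun y : X * Y => K y.1 ((fun w => (w, y)) @^-1` E)).
Proof.
move=> mE.
have mA : measurable [set p : (X * Y) * X | E (p.2, p.1)].
  rewrite -[X in measurable X]setTI.
  have : measurable_fun setT (fun p : (X * Y) * X => (p.2, p.1)).
    exact: measurable_fun_pair measurable_snd measurable_fst.
  by apply.
have := @measurable_fun_xsection_finite_kernel _ _ _ _ R kfst _ (mem_set mA).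
congr measurable_fun; apply/funext => y; rewrite /kfst; congr (K y.1 _).
by apply/seteqP; split => w; rewrite /xsection /= inE.
Qed.

Lemma ltimes_marg (eta : probability (X * Y)%type R) F : measurable F ->
  ltimes K eta (setT `*` F) = eta F.
Proof.
move=> mF; rewrite /ltimes.
transitivity (\int[eta]_z (\1_F z)%:E); last by rewrite integral_indic // setIT.
apply: eq_integral => z _; rewrite indicE.
have [zF|zF] := boolP (z \in F).
  rewrite (_ : _ @^-1` _ = setT) ?prob_kernel //.
  by apply/seteqP; split => w //= _; split => //; rewrite inE in zF.
rewrite (_ : _ @^-1` _ = set0) ?measure0 //.
by apply/seteqP; split => w //= [_]; rewrite -inE => /(negP zF).
Qed.

End kfst.

Section mkmf.
Context d1 d2 (T1 : measurableType d1) (T2 : measurableType d2)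
  (f : T1 -> T2) (mf : measurable_fun setT f).
Definition mkmf : {mfun T1 >-> T2} :=
  HB.pack f (isMeasurableFun.Build _ _ _ _ f mf).
End mkmf.

Unset Implicit Arguments.

Theorem proposition2p3 (R : realType) (S : pmetricType R) (n : nat)
    (K : R.-pker (borel S) ~> (borel S))
    (A : S -> S -> 'M[R]_n.+1)
    (m : probability (borel S * (borel S * borel (projsp R n))%type)%type R) :
  compact [set: S] ->
  weak_continuous K ->
  uniformly_ergodic K ->
  (forall y x, A y x \in unitmx) ->
  (forall i j, measurable_fun [set: (borel S * borel S)%type]
                 (fun z : (borel S * borel S)%type => A z.1 z.2 i j)) ->
  stationary (Kbar K A) m ->
  exists eta : probability (borel S * borel (projsp R n))%type R,
    [/\ (forall E, measurable E -> m E = ltimes K eta E),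
        stationary (KA K A) eta
      & forall eta' : probability (borel S * borel (projsp R n))%type R,
          (forall E, measurable E -> m E = ltimes K eta' E) ->
          forall E, measurable E -> eta' E = eta E].
Proof.
move=> _ _ _ Au Am st.
pose phi (z : (borel S * (borel S * borel (projsp R n)))%type) :
  (borel S * borel (projsp R n))%type := (z.1, pact (A z.1 z.2.1) z.2.2).
have mphi : measurable_fun setT phi.
  apply: measurable_fun_pair; first exact: measurable_fst.
  have h := @pact_meas R n _ (borel S * borel S)%type (fun t => A t.1 t.2)
    (fun t => Au t.1 t.2) Am.
  have mre : measurable_fun setT
      (fun z : (borel S * (borel S * borel (projsp R n)))%type =>
         ((z.1, z.2.1), z.2.2)).
    apply: measurable_fun_pair; last first.
      exact: measurableT_comp measurable_snd measurable_snd.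
    apply: measurable_fun_pair; first exact: measurable_fst.
    exact: measurableT_comp measurable_fst measurable_snd.
  exact: measurableT_comp h mre.
pose eta := distribution m (mkmf mphi).
have hE : forall E, measurable E -> m E = ltimes K eta E.
  move=> E mE; rewrite (st E mE) /ltimes.
  have := @ge0_integral_pushforward _ _ _ _ R phi mphi m setT
    (fun y => K y.1 ((fun w => (w, y)) @^-1` E)) measurableT (gE_meas K mE).
  rewrite preimage_setT => <-; last by move=> y _; exact: measure_ge0.
  by [].
exists eta; split => //.
  move=> F mF.
  have mF' : measurable (phi @^-1` F).
    by rewrite -[X in measurable X]setTI; exact: (mphi measurableT F mF).
  exact: hE mF'.
move=> eta' h' F mF.
have mTF : measurable ([set: borel S] `*` F) by apply: measurableX => //.
by rewrite -(ltimes_marg K eta' mF) -h' // hE // ltimes_marg.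
Qed.
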